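(* Let $A,B\in\mathcal{B}(\mathcal{H})$ and let $B=X+iY$ be the Cartesian decomposition of $B$. Then: (i) if $XY+YX=0$, then $w(AB\pm BA^* )\leq 2\|A\|\max\{w^{1/2}(X^2),w^{1/2}(Y^2)\}$; (ii) if $B$ is self-adjoint, then $w(AB\pm BA^* )\leq 2\|A\|\,w^{1/2}(X^2)$; (iii) if $B$ is self-adjoint, then $w(AB)\leq\|A\|\,w^{1/2}(X^2)$.
   Context: $\mathcal{H}$ is a complex Hilbert space, $\mathcal{B}(\mathcal{H})$ the bounded linear operators on it, $w$ the numerical radius, $\|\cdot\|$ the operator norm. The Cartesian decomposition $B=X+iY$ means $X=\frac{B+B^*}{2}$, $Y=\frac{B-B^*}{2i}$ (both self-adjoint). *)

(* Defs.v *)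
From HB Require Import structures.
From mathcomp Require Import all_boot all_order all_algebra.
From mathcomp Require Import complex.
From mathcomp Require Import all_classical all_reals.
Set Implicit Arguments. Unset Strict Implicit. Unset Printing Implicit Defensive.
Import Order.TTheory GRing.Theory Num.Theory.
Local Open Scope ring_scope.

Section Hilbert.
Variable R : realType.
Variable H : lmodType R[i].
Variable ip : H -> H -> R[i].

Definition hnorm (x : H) : R := Num.sqrt (complex.Re (ip x x)).

Record isHilbert : Prop := {
  ip_linear : forall (a : R[i]) (x y z : H), ip (a *: x + y) z = a * ip x z + ip y z;
  ip_conj : forall x y : H, ip y x = (ip x y)^*;
  ip_pos : forall x : H, 0 <= ip x x;
  ip_def : forall x : H, ip x x = 0 -> x = 0;
  ip_complete : forall u : nat -> H,
    (forall e : R, 0 < e -> exists N : nat, forall m n : nat,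
        (N <= m)%N -> (N <= n)%N -> hnorm (u m - u n) < e) ->
    exists l : H, forall e : R, 0 < e -> exists N : nat, forall n : nat,
        (N <= n)%N -> hnorm (u n - l) < e
}.

Definition bounded_op (T : H -> H) : Prop :=
  (forall (a : R[i]) (x y : H), T (a *: x + y) = a *: T x + T y) /\
  exists M : R, forall x : H, hnorm (T x) <= M * hnorm x.

Definition is_adjoint (T T' : H -> H) : Prop :=
  forall x y : H, ip (T x) y = ip x (T' y).

Definition opnorm (T : H -> H) : R :=
  sup [set hnorm (T x) | x in [set x | hnorm x = 1]]%classic.

Definition numrad (T : H -> H) : R :=
  sup [set ComplexField.Normc.normc (ip (T x) x) | x in [set x | hnorm x = 1]]%classic.

End Hilbert.

(* Main.v *)
Require Import Defs.
From HB Require Import structures.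
From mathcomp Require Import all_boot all_order all_algebra.
From mathcomp Require Import complex.
From mathcomp Require Import all_classical all_reals.
From mathcomp Require Import ring lra.
Import Order.TTheory GRing.Theory Num.Theory.
Local Open Scope ring_scope.
Set Implicit Arguments. Unset Strict Implicit. Unset Printing Implicit Defensive.

Section CFacts.
Variable R : realType.
Local Notation C := (R[i]).
Local Notation normc := ComplexField.Normc.normc.
Lemma cmulE (a b c d : R) : (Complex a b : C) * (Complex c d) = Complex (a * c - b * d) (a * d + b * c). Proof. reflexivity. Qed.
Lemma caddE (a b c d : R) : (Complex a b : C) + (Complex c d) = Complex (a + c) (b + d). Proof. reflexivity. Qed.
Lemma coppE (a b : R) : - (Complex a b : C) = Complex (- a) (- b). Proof. reflexivity. Qed.
Lemma cconjE (a b : R) : Num.conj (Complex a b : C) = Complex a (- b). Proof. reflexivity. Qed.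
Lemma ciE : ('i : C) = Complex 0 1. Proof. reflexivity. Qed.
Lemma c1E : (1 : C) = Complex 1 0. Proof. reflexivity. Qed.
Lemma c0E : (0 : C) = Complex 0 0. Proof. reflexivity. Qed.
Lemma crealE (a : R) : ((a%:C)%C : C) = Complex a 0. Proof. reflexivity. Qed.
Lemma normcE' (a b : R) : normc (Complex a b : C) = Num.sqrt (a ^+ 2 + b ^+ 2). Proof. reflexivity. Qed.
Lemma cle0E (a b : R) : ((0 : C) <= Complex a b) = (b == 0) && (0 <= a). Proof. reflexivity. Qed.
Lemma ceqE (a b c d : R) : (Complex a b : C) = Complex c d <-> a = c /\ b = d.
Proof. by split; [case=> -> -> | case=> -> ->]. Qed.
Lemma normc_ge0 (z : C) : 0 <= normc z.
Proof. by case: z => a b; rewrite normcE' sqrtr_ge0. Qed.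
Lemma normc_sq (z : C) : normc z ^+ 2 = complex.Re z ^+ 2 + complex.Im z ^+ 2.
Proof. case: z => a b; rewrite normcE' sqr_sqrtr //=; nra. Qed.
Lemma Re_le_normc (z : C) : complex.Re z <= normc z.
Proof. 
have h1 := normc_sq z; have h2 := normc_ge0 z; nra.
Qed.
Lemma normc_conj (z : C) : normc (Num.conj z) = normc z.
Proof. by case: z => a b; rewrite cconjE !normcE' sqrrN. Qed.
Lemma normc_real (a : R) : 0 <= a -> normc ((a%:C)%C) = a.
Proof. by move=> ha; rewrite crealE normcE' expr0n /= addr0 sqrtr_sqr ger0_norm. Qed.
Lemma normcM' (x y : C) : normc (x * y) = normc x * normc y.
Proof. exact: ComplexField.Normc.normcM. Qed.
Lemma normcD' (x y : C) : normc (x + y) <= normc x + normc y.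
Proof. exact: le_normcD. Qed.
End CFacts.

Section Hilb.
Variable R : realType.
Variable H : lmodType R[i].
Variable ip : H -> H -> R[i].
Hypothesis hH : isHilbert ip.
Local Notation C := (R[i]).
Local Notation normc := ComplexField.Normc.normc.

Definition rp (x y : H) : R := complex.Re (ip x y).

Lemma ipDl x y z : ip (x + y) z = ip x z + ip y z.
Proof. by have := ip_linear hH 1 x y z; rewrite scale1r mul1r. Qed.
Lemma ip0l z : ip 0 z = 0.
Proof.
have h := ipDl 0 0 z; rewrite addr0 in h.
by apply: (@addrI _ (ip 0 z)); rewrite addr0 -h.
Qed.
Lemma ipZl a x z : ip (a *: x) z = a * ip x z.
Proof. by have := ip_linear hH a x 0 z; rewrite addr0 ip0l addr0. Qed.
Lemma ipNl x z : ip (- x) z = - ip x z.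
Proof. by rewrite -scaleN1r ipZl mulN1r. Qed.
Lemma ipBl x y z : ip (x - y) z = ip x z - ip y z.
Proof. by rewrite ipDl ipNl. Qed.
Lemma ipDr x y z : ip x (y + z) = ip x y + ip x z.
Proof. by rewrite !(ip_conj hH _ x) ipDl rmorphD. Qed.
Lemma ipZr a x z : ip x (a *: z) = Num.conj a * ip x z.
Proof. by rewrite !(ip_conj hH _ x) ipZl rmorphM. Qed.
Lemma ip0r z : ip z 0 = 0.
Proof. by rewrite (ip_conj hH) ip0l rmorph0. Qed.
Lemma ipNr x z : ip x (- z) = - ip x z.
Proof. by rewrite -scaleN1r ipZr rmorphN rmorph1 mulN1r. Qed.
Lemma ipBr x y z : ip x (y - z) = ip x y - ip x z.
Proof. by rewrite ipDr ipNr. Qed.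

Lemma ipxx x : ip x x = ((rp x x)%:C)%C /\ 0 <= rp x x.
Proof.
have := ip_pos hH x; rewrite /rp; case: (ip x x) => a b.
by rewrite cle0E => /andP[/eqP -> ha]; split.
Qed.
Lemma rp_ge0 x : 0 <= rp x x. Proof. by case: (ipxx x). Qed.
Lemma rp_sym x y : rp y x = rp x y.
Proof. by rewrite /rp (ip_conj hH x y); case: (ip x y) => a b. Qed.
Lemma ReMr (c : R) (w : C) : complex.Re (((c%:C)%C : C) * w) = c * complex.Re w.
Proof. by case: w => a b; rewrite crealE cmulE /= mul0r subr0. Qed.
Lemma rpZl (c : R) x z : rp (((c%:C)%C : C) *: x) z = c * rp x z.
Proof. by rewrite /rp ipZl ReMr. Qed.
Lemma rpDl x y z : rp (x + y) z = rp x z + rp y z.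
Proof. by rewrite /rp ipDl; case: (ip x z) => ? ?; case: (ip y z). Qed.
Lemma rpZr (c : R) x z : rp z (((c%:C)%C : C) *: x) = c * rp z x.
Proof. by rewrite rp_sym rpZl rp_sym. Qed.
Lemma rpDr x y z : rp z (x + y) = rp z x + rp z y.
Proof. by rewrite rp_sym rpDl !(rp_sym z). Qed.
Lemma rp0 x : rp x x = 0 -> x = 0.
Proof. by move=> h; apply: (ip_def hH); case: (ipxx x) => -> _; rewrite h. Qed.
Lemma rp0r x : rp x 0 = 0.
Proof. by rewrite /rp ip0r. Qed.

Lemma cs_re x y : rp x y ^+ 2 <= rp x x * rp y y.
Proof.
have [b0|bpos] := eqVneq (rp y y) 0.
  by rewrite b0 mulr0 (rp0 b0) rp0r expr0n.
have hb : 0 < rp y y by rewrite lt_def bpos rp_ge0.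
set a := rp x y; set b := rp y y.
pose v := ((b%:C)%C : C) *: x + (((- a)%:C)%C : C) *: y.
have := rp_ge0 v.
rewrite /v !rpDl !rpDr !rpZl !rpZr -/a -/b (rp_sym x y) -/a -/b.
move=> h; have hx := rp_ge0 x; nra.
Qed.

Lemma cs x y : normc (ip x y) ^+ 2 <= rp x x * rp y y.
Proof.
pose om := Num.conj (ip x y).
have e1 : rp (om *: x) y = normc (ip x y) ^+ 2.
  rewrite /rp ipZl /om normc_sq; case: (ip x y) => a b.
  by rewrite cconjE cmulE /=; ring.
have e2 : rp (om *: x) (om *: x) = normc (ip x y) ^+ 2 * rp x x.
  rewrite /rp ipZl ipZr /om normc_sq; case: (ipxx x) => -> _.
  case: (ip x y) => a b; rewrite !cconjE crealE !cmulE /=; ring.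
have h := cs_re (om *: x) y; rewrite e1 e2 -mulrA in h.
have h1 := rp_ge0 x; have h2 := rp_ge0 y.
have h3 : 0 <= normc (ip x y) ^+ 2 by rewrite exprn_ge0 // normc_ge0.
have h4 : 0 <= rp x x * rp y y by rewrite mulr_ge0.
move: h3 h4 h; set n := normc (ip x y) ^+ 2; set P := rp x x * rp y y => h3 h4 h.
nra.
Qed.

Lemma hnorm_sq x : hnorm ip x ^+ 2 = rp x x.
Proof. by rewrite /hnorm sqr_sqrtr // rp_ge0. Qed.
Lemma hnorm_ge0 x : 0 <= hnorm ip x.
Proof. exact: sqrtr_ge0. Qed.
Lemma cs_norm x y : normc (ip x y) <= hnorm ip x * hnorm ip y.
Proof.
have h := cs x y; rewrite -!hnorm_sq in h.
rewrite -exprMn in h.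
have h4 : 0 <= hnorm ip x * hnorm ip y by rewrite mulr_ge0 // hnorm_ge0.
have h3 := normc_ge0 (ip x y).
move: h h3 h4; set a := normc _; set b := _ * _ => h h3 h4.
nra.
Qed.
Lemma rp_le x y : rp x y <= hnorm ip x * hnorm ip y.
Proof. exact: le_trans (Re_le_normc _) (cs_norm x y). Qed.
End Hilb.

Lemma sup_le_c (R : realType) (E : set R) c :
  0 <= c -> (forall x, E x -> x <= c) -> sup E <= c.
Proof.
move=> c0 hE; have [ne|e0] := pselect (E !=set0)%classic.
  by apply: ge_sup.
have -> : E = set0%classic.
  by apply/seteqP; split=> x // Ex; exfalso; apply: e0; exists x.
by rewrite sup0.
Qed.

Lemma sq_le (R : realType) (u v : R) : 0 <= v -> u ^+ 2 <= v ^+ 2 -> u <= v.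
Proof. move=> hv h; nra. Qed.

Section Ops.
Variable R : realType.
Variable H : lmodType R[i].
Variable ip : H -> H -> R[i].
Hypothesis hH : isHilbert ip.
Local Notation C := (R[i]).
Local Notation normc := ComplexField.Normc.normc.
Local Notation hnorm := (hnorm ip).
Local Notation rp := (rp ip).

Lemma bop0 T : bounded_op ip T -> T 0 = 0.
Proof.
case=> lin _; have := lin 1 0 0; rewrite !scale1r addr0 => h.
by apply: (@addrI _ (T 0)); rewrite addr0 -h.
Qed.
Lemma bopZ T a x : bounded_op ip T -> T (a *: x) = a *: T x.
Proof. move=> hT; have := hT.1 a x 0; rewrite addr0 bop0 // addr0 => ->. done. Qed.

Lemma hnorm0 : hnorm 0 = 0.
Proof. by rewrite /hnorm -/(rp 0 0) rp0r // sqrtr0. Qed.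

Lemma opnorm_ub T x : bounded_op ip T -> hnorm x = 1 -> hnorm (T x) <= opnorm ip T.
Proof.
move=> hT hx; apply: ub_le_sup; last by exists x.
case: hT => _ [M hM]; exists M => r [y /= hy <-].
by have := hM y; rewrite hy mulr1.
Qed.

Lemma opnorm_ge0 T : bounded_op ip T -> 0 <= opnorm ip T.
Proof.
move=> hT; have [[x hx]|nx] := pselect (exists x, hnorm x = 1).
  exact: le_trans (hnorm_ge0 ip _) (opnorm_ub hT hx).
rewrite /opnorm.
have -> : [set hnorm (T x) | x in [set x | hnorm x = 1]]%classic = set0%classic.
  by apply/seteqP; split=> r // [x hx _]; exfalso; apply: nx; exists x.
by rewrite sup0.
Qed.

Lemma opnorm_gen T z : bounded_op ip T -> hnorm (T z) <= opnorm ip T * hnorm z.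
Proof.
move=> hT.
have [z0|zn] := eqVneq (rp z z) 0.
  by rewrite (rp0 hH z0) bop0 // hnorm0 mulr0.
have ht : 0 < hnorm z.
  rewrite lt_def hnorm_ge0 // andbT /hnorm sqrtr_eq0 -ltNge lt_def zn.
  exact: rp_ge0.
set t := hnorm z in ht *.
pose x := (((t^-1)%:C)%C : C) *: z.
have hx : hnorm x = 1.
  rewrite /hnorm -/(rp x x) /x rpZl // rpZr // -(hnorm_sq hH z) -/t.
  have tn : t != 0 by rewrite gt_eqF.
  have -> : t^-1 * (t^-1 * t ^+ 2) = 1 by field.
  by rewrite sqrtr1.
have h1 := opnorm_ub hT hx.
have h2 : hnorm (T x) = t^-1 * hnorm (T z).
  rewrite /x bopZ // /hnorm -!/(rp _ _) rpZl // rpZr // mulrA sqrtrM.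
    by rewrite -expr2 sqrtr_sqr ger0_norm // invr_ge0 ltW.
  by rewrite mulr_ge0 // invr_ge0 ltW.
rewrite h2 in h1.
have h3 : hnorm (T z) = t * (t^-1 * hnorm (T z)).
  by rewrite mulrA mulfV ?gt_eqF // mul1r.
rewrite h3 mulrC; apply: ler_wpM2r => //; exact: ltW.
Qed.

Lemma numrad_le T c : 0 <= c ->
  (forall x, hnorm x = 1 -> normc (ip (T x) x) <= c) -> numrad ip T <= c.
Proof.
move=> c0 h; apply: sup_le_c => // r [x /= hx <-]; exact: h.
Qed.

Lemma numrad_ge T K x : (forall x, hnorm x = 1 -> normc (ip (T x) x) <= K) ->
  hnorm x = 1 -> normc (ip (T x) x) <= numrad ip T.
Proof.
move=> hK hx; apply: ub_le_sup; last by exists x.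
by exists K => r [y /= hy <-]; exact: hK.
Qed.

Lemma sa_numrad F : (forall u v, ip (F u) v = ip u (F v)) ->
  (exists K, forall x, hnorm x = 1 -> rp (F x) (F x) <= K) ->
  forall x, hnorm x = 1 -> rp (F x) (F x) <= numrad ip (fun x => F (F x)).
Proof.
move=> sa [K hK] x hx.
have e y : normc (ip (F (F y)) y) = rp (F y) (F y).
  by rewrite sa; case: (ipxx hH (F y)) => -> h; rewrite normc_real.
rewrite -e; apply: (@numrad_ge _ K) => // y hy; rewrite e; exact: hK.
Qed.
End Ops.

Section Main.
Variable R : realType.
Variable H : lmodType R[i].
Variable ip : H -> H -> R[i].
Hypothesis hH : isHilbert ip.
Local Notation C := (R[i]).
Local Notation normc := ComplexField.Normc.normc.
Local Notation hnorm := (hnorm ip).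
Local Notation rp := (rp ip).
Variables A As B Bs : H -> H.
Hypotheses (hA : bounded_op ip A) (hB : bounded_op ip B)
  (hAs : is_adjoint ip A As) (hBs : is_adjoint ip B Bs).

Definition Xf x := (2 : C)^-1 *: (B x + Bs x).
Definition Yf x := (2 * 'i : C)^-1 *: (B x - Bs x).

Lemma Bs_adj u v : ip (Bs u) v = ip u (B v).
Proof. by rewrite (ip_conj hH v (Bs u)) -hBs -(ip_conj hH). Qed.

Lemma X_adj u v : ip (Xf u) v = ip u (Xf v).
Proof.
rewrite /Xf (ipZl hH) (ipZr hH) (ipDl hH) (ipDr hH) // Bs_adj hBs fmorphV rmorph_nat.
by rewrite addrC.
Qed.

Lemma conj_k : Num.conj ((2 * 'i : C)^-1) = - (2 * 'i : C)^-1.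
Proof. by rewrite fmorphV rmorphM rmorph_nat /= conjCi mulrN invrN. Qed.

Lemma Y_adj u v : ip (Yf u) v = ip u (Yf v).
Proof.
rewrite /Yf (ipZl hH) (ipZr hH) (ipBl hH) (ipBr hH) // Bs_adj hBs conj_k.
ring.
Qed.

Lemma decomp x : B x = Xf x + 'i *: Yf x /\ Bs x = Xf x - 'i *: Yf x.
Proof.
have e : ('i : C) * (2 * 'i)^-1 = 2^-1.
  have := neq0Ci C => hi; field; exact: hi.
rewrite /Xf /Yf scalerA e.
split.
  rewrite -scalerDr addrACA subrr addr0 -mulr2n -[B x *+ 2]scaler_nat scalerA mulVf ?scale1r //.
  by rewrite pnatr_eq0.
rewrite -scalerBr.
have -> : (B x + Bs x) - (B x - Bs x) = Bs x *+ 2 by rewrite opprB addrC addrA subrK mulr2n.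
rewrite -[Bs x *+ 2]scaler_nat scalerA mulVf ?scale1r //.
by rewrite pnatr_eq0.
Qed.

Lemma adj_bound x : hnorm x = 1 -> hnorm (As x) <= opnorm ip A.
Proof.
move=> hx; set y := As x.
have e : rp y y = rp (A y) x by rewrite /rp hAs.
have h1 := cs_re hH (A y) x.
rewrite -e -(hnorm_sq hH x) hx expr1n mulr1 -(hnorm_sq hH (A y)) in h1.
have h2 := opnorm_gen hH y hA.
have h3 := hnorm_ge0 ip (A y).
have h4 := hnorm_ge0 ip y.
have h5 := opnorm_ge0 hA.
rewrite -(hnorm_sq hH y) in h1.
move: h1 h2 h3 h4 h5; set a := opnorm ip A; set u := hnorm (A y); set t := hnorm y.
move=> h1 h2 h3 h4 h5.
have h6 : u ^+ 2 <= (a * t) ^+ 2.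
  by rewrite !expr2; apply: ler_pM => //.
rewrite exprMn in h6.
have h7 : (t ^+ 2) ^+ 2 <= a ^+ 2 * t ^+ 2 by apply: le_trans h1 h6.
have [t0|tp] := eqVneq t 0; first by rewrite t0.
have tp' : 0 < t by rewrite lt_def tp h4.
apply: sq_le => //.
have tt : 0 < t ^+ 2 by rewrite exprn_gt0.
rewrite -(ler_pM2r tt) -expr2; exact: h7.
Qed.

Lemma sq_bound (s L : R) : 0 <= s -> s ^+ 2 <= L * s -> s ^+ 2 <= L ^+ 2.
Proof.
move=> s0 h; have [sL|Ls] := leP s L; first nra.
nra.
Qed.

Lemma bound_comb (k sg : C) : normc sg = 1 ->
  exists K, forall x, hnorm x = 1 ->
    rp (k *: (B x + sg *: Bs x)) (k *: (B x + sg *: Bs x)) <= K.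
Proof.
move=> hs; case: hB => _ [M hM].
exists ((2 * normc k * M) ^+ 2) => x hx.
pose p := k *: (B x + sg *: Bs x).
have e1 : rp p p = normc (ip p p).
  by case: (ipxx hH p) => -> h; rewrite normc_real.
have e2 : ip p p = k * (ip (B x) p + sg * ip (Bs x) p).
  by rewrite {1}/p (ipZl hH) (ipDl hH) (ipZl hH).
have b1 : normc (ip (B x) p) <= M * hnorm p.
  apply: le_trans (cs_norm hH _ _) _; apply: ler_wpM2r; first exact: hnorm_ge0.
  by have := hM x; rewrite hx mulr1.
have b2 : normc (ip (Bs x) p) <= M * hnorm p.
  rewrite Bs_adj; apply: le_trans (cs_norm hH _ _) _; rewrite hx mul1r; exact: hM.
have b3 : rp p p <= normc k * (M * hnorm p + M * hnorm p).
  rewrite e1 e2 normcM'; apply: ler_wpM2l; first exact: normc_ge0.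
  apply: le_trans (normcD' _ _) _; apply: lerD => //.
  by rewrite normcM' hs mul1r.
rewrite -/p -(hnorm_sq hH p); apply: sq_bound; first exact: hnorm_ge0.
rewrite -(hnorm_sq hH p) in b3; apply: le_trans b3 _.
by rewrite le_eqVlt; apply/orP; left; apply/eqP; ring.
Qed.

Lemma normc1' : normc (1 : C) = 1.
Proof. by rewrite c1E normcE' expr1n expr0n addr0 sqrtr1. Qed.
Lemma normcN1' : normc (-1 : C) = 1.
Proof. by rewrite c1E coppE normcE' sqrrN expr1n oppr0 expr0n addr0 sqrtr1. Qed.

Lemma Xnum x : hnorm x = 1 -> rp (Xf x) (Xf x) <= numrad ip (fun x => Xf (Xf x)).
Proof.
move=> hx; apply: (sa_numrad hH X_adj) => //.
have [K hK] := bound_comb ((2 : C)^-1) normc1'.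
by exists K => z hz; have := hK z hz; rewrite scale1r.
Qed.

Lemma Ynum x : hnorm x = 1 -> rp (Yf x) (Yf x) <= numrad ip (fun x => Yf (Yf x)).
Proof.
move=> hx; apply: (sa_numrad hH Y_adj) => //.
have [K hK] := bound_comb ((2 * 'i : C)^-1) normcN1'.
by exists K => z hz; have := hK z hz; rewrite scaleN1r.
Qed.

Lemma core p q y m : rp p q = 0 -> rp p p <= m -> rp q q <= m ->
  rp p y ^+ 2 + rp q y ^+ 2 <= m * rp y y.
Proof.
move=> h0 hp hq; set c := rp p y; set s := rp q y.
pose r := ((c%:C)%C : C) *: p + ((s%:C)%C : C) *: q.
have e1 : rp r y = c * c + s * s by rewrite /r (rpDl hH) !(rpZl hH).
have e2 : rp r r = c * c * rp p p + s * s * rp q q.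
  rewrite /r (rpDl hH) !(rpDr hH) !(rpZl hH) !(rpZr hH) (rp_sym hH p q) h0; ring.
have h := cs_re hH r y; rewrite e1 e2 in h.
have hy := rp_ge0 hH y; have hpp := rp_ge0 hH p.
have h3 : c * c * rp p p + s * s * rp q q <= (c * c + s * s) * m by nra.
have h4 : (c * c + s * s) ^+ 2 <= (c * c + s * s) * (m * rp y y).
  by apply: le_trans h _; rewrite mulrA; apply: ler_wpM2r.
have hK : 0 <= m * rp y y by apply: mulr_ge0 => //; apply: le_trans hp.
rewrite !expr2; move: h4 hK; set N := c * c + s * s; set K := m * rp y y => h4 hK.
have hN : 0 <= N by rewrite /N; nra.
nra.
Qed.

Lemma rp_rot u v : rp ((- 'i) *: u) ((- 'i) *: v) = rp u v.
Proof.
rewrite /rp (ipZl hH) (ipZr hH); case: (ip u v) => a b.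
by rewrite ciE coppE cconjE !cmulE /=; ring.
Qed.
Lemma rp_rot1 u v : rp ((- 'i) *: u) v = complex.Im (ip u v).
Proof.
rewrite /rp (ipZl hH); case: (ip u v) => a b.
by rewrite ciE coppE !cmulE /=; ring.
Qed.

Lemma main_bound (e : C) x M : (e = 1 \/ e = -1) -> hnorm x = 1 -> 0 <= M ->
  rp (Xf x) (Yf x) = 0 -> rp (Xf x) (Xf x) <= M ^+ 2 -> rp (Yf x) (Yf x) <= M ^+ 2 ->
  normc (ip (A (B x) + e *: B (As x)) x) <= 2 * opnorm ip A * M.
Proof.
move=> he hx hM h0 hp hq.
have hy := adj_bound hx.
have hyy : rp (As x) (As x) <= opnorm ip A ^+ 2.
  rewrite -(hnorm_sq hH); have := hnorm_ge0 ip (As x); nra.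
have ha := opnorm_ge0 hA.
have hMy : M ^+ 2 * rp (As x) (As x) <= M ^+ 2 * opnorm ip A ^+ 2.
  by apply: ler_wpM2l => //; rewrite exprn_ge0.
have ez : ip (A (B x) + e *: B (As x)) x = ip (B x) (As x) + e * ip (As x) (Bs x).
  by rewrite (ipDl hH) (ipZl hH) hBs hAs.
rewrite ez; case: (decomp x) => dB dBs; rewrite dB dBs.
move: h0 hp hq hyy hMy; generalize (Xf x) (Yf x) (As x) => p q y h0 hp hq hyy hMy.
rewrite (ipDl hH) (ipZl hH) (ipBr hH) (ipZr hH) conjCi (ip_conj hH p y) (ip_conj hH q y).
apply: sq_le; first by rewrite mulr_ge0 // mulr_ge0.
rewrite normc_sq.
case: he => ->.
  have hc := core y h0 hp hq.
  move: hc hyy hMy; rewrite /rp; case: (ip p y) => a1 b1; case: (ip q y) => a2 b2.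
  rewrite ciE c1E ?cconjE ?coppE ?cmulE ?caddE ?coppE ?cmulE ?caddE /= => hc hyy hMy.
  nra.
have hc := @core ((- 'i) *: p) ((- 'i) *: q) y (M ^+ 2).
rewrite !rp_rot !rp_rot1 in hc; have {hc} hc := hc h0 hp hq.
move: hc hyy hMy; rewrite /rp; case: (ip p y) => a1 b1; case: (ip q y) => a2 b2.
rewrite ciE c1E ?cconjE ?coppE ?cmulE ?caddE ?coppE ?cmulE ?caddE /= => hc hyy hMy.
nra.
Qed.

Lemma Yzero : (forall x, Bs x = B x) -> forall x, Yf x = 0.
Proof. by move=> hBB x; rewrite /Yf hBB subrr scaler0. Qed.
Lemma Xeq : (forall x, Bs x = B x) -> forall x, Xf x = B x.
Proof. by move=> hBB x; case: (decomp x) => dB _; rewrite dB Yzero // scaler0 addr0. Qed.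

Lemma iii_bound x : (forall x, Bs x = B x) -> hnorm x = 1 ->
  normc (ip (A (B x)) x) <= opnorm ip A * Num.sqrt (numrad ip (fun x => Xf (Xf x))).
Proof.
move=> hBB hx; rewrite hAs; apply: le_trans (cs_norm hH _ _) _.
rewrite [X in _ <= X]mulrC; apply: ler_pM; first exact: hnorm_ge0.
- exact: hnorm_ge0.
- rewrite -(Xeq hBB) /hnorm; apply: ler_wsqrtr; exact: Xnum.
- exact: adj_bound.
Qed.
End Main.

Lemma le_sqmax (R : realType) (a b r : R) : 0 <= r -> r <= a ->
  r <= Num.max (Num.sqrt a) (Num.sqrt b) ^+ 2.
Proof.
move=> r0 ra; have a0 : 0 <= a := le_trans r0 ra.
have h1 := sqr_sqrtr a0; have h2 : Num.sqrt a <= Num.max (Num.sqrt a) (Num.sqrt b).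
  by rewrite le_max lexx.
have h3 := sqrtr_ge0 a.
move: h1 h2 h3; set s := Num.sqrt a; set m := Num.max _ _ => h1 h2 h3.
nra.
Qed.
Lemma le_sqmax2 (R : realType) (a b r : R) : 0 <= r -> r <= b ->
  r <= Num.max (Num.sqrt a) (Num.sqrt b) ^+ 2.
Proof.
move=> r0 rb; have b0 : 0 <= b := le_trans r0 rb.
have h1 := sqr_sqrtr b0; have h2 : Num.sqrt b <= Num.max (Num.sqrt a) (Num.sqrt b).
  by rewrite le_max lexx orbT.
have h3 := sqrtr_ge0 b.
move: h1 h2 h3; set s := Num.sqrt b; set m := Num.max _ _ => h1 h2 h3.
nra.
Qed.

Unset Implicit Arguments.

Theorem corollary2p14 (R : realType) (H : lmodType R[i]) (ip : H -> H -> R[i])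
  (hH : isHilbert ip) (A As B Bs : H -> H)
  (hA : bounded_op ip A) (hB : bounded_op ip B)
  (hAs : is_adjoint ip A As) (hBs : is_adjoint ip B Bs) :
  let X := fun x => (2 : R[i])^-1 *: (B x + Bs x) in
  let Y := fun x => (2 * 'i : R[i])^-1 *: (B x - Bs x) in
  (* (i) *)
  ((forall x, X (Y x) + Y (X x) = 0) ->
     forall e : R[i], e = 1 \/ e = -1 ->
       numrad ip (fun x => A (B x) + e *: B (As x))
         <= 2 * opnorm ip A
              * Num.max (Num.sqrt (numrad ip (fun x => X (X x))))
                        (Num.sqrt (numrad ip (fun x => Y (Y x))))) /\
  (* (ii) *)
  ((forall x, Bs x = B x) ->
     forall e : R[i], e = 1 \/ e = -1 ->
       numrad ip (fun x => A (B x) + e *: B (As x))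
         <= 2 * opnorm ip A * Num.sqrt (numrad ip (fun x => X (X x)))) /\
  (* (iii) *)
  ((forall x, Bs x = B x) ->
     numrad ip (fun x => A (B x))
       <= opnorm ip A * Num.sqrt (numrad ip (fun x => X (X x)))).
Proof.
move=> X Y.
have ha := opnorm_ge0 hA.
split; [|split].
- move=> hXY e he; apply: numrad_le.
    by rewrite mulr_ge0 ?mulr_ge0 // le_max sqrtr_ge0.
  move=> x hx; apply: (main_bound hH hA hAs hBs he hx).
  + by rewrite le_max sqrtr_ge0.
  + have h' : Xf B Bs (Yf B Bs x) + Yf B Bs (Xf B Bs x) = 0 := hXY x.
    have e1 : rp ip (Xf B Bs (Yf B Bs x)) x = rp ip (Yf B Bs x) (Xf B Bs x).
      by rewrite /rp (X_adj hH hBs).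
    have e2 : rp ip (Yf B Bs (Xf B Bs x)) x = rp ip (Xf B Bs x) (Yf B Bs x).
      by rewrite /rp (Y_adj hH hBs).
    have := congr1 (fun v => rp ip v x) h'.
    rewrite /= (rpDl hH) e1 e2 (rp_sym hH (Xf B Bs x)) (rp_sym hH x 0) (rp0r hH).
    move=> h; lra.
  + exact: le_sqmax (rp_ge0 hH _) (Xnum hH hB hBs hx).
  + exact: le_sqmax2 (rp_ge0 hH _) (Ynum hH hB hBs hx).
- move=> hBB e he; apply: numrad_le.
    by rewrite mulr_ge0 ?mulr_ge0 // sqrtr_ge0.
  move=> x hx; apply: (main_bound hH hA hAs hBs he hx).
  + exact: sqrtr_ge0.
  + by rewrite (Yzero hBB) (rp0r hH).
  + have h := Xnum hH hB hBs hx; rewrite sqr_sqrtr //; exact: le_trans (rp_ge0 hH _) h.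
  + by rewrite (Yzero hBB) (rp0r hH) sqr_ge0.
- move=> hBB; apply: numrad_le; first by rewrite mulr_ge0 // sqrtr_ge0.
  move=> x hx; exact: (iii_bound hH hA hB hAs hBs hBB hx).
Qed.
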